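(* Let $n\ge2$ and $\mu\in[0,1-\frac1n]$. Every optimal solution $P=(p_{ij})$ of problem (P) is TP2, i.e. $p_{ij}\,p_{i'j'}\ge p_{ij'}\,p_{i'j}$ for all $1\le i<i'\le n$ and $1\le j<j'\le n$ (equivalently, the associated step density $f(x,y)=n^2p_{ij}$ on $((i-1)/n,i/n)\times((j-1)/n,j/n)$ satisfies $f(x,y)f(x',y')\ge f(x,y')f(x',y)$ whenever $x<x'$, $y<y'$).
   Context: An $n\times n$ checkerboard copula is a real $n\times n$ matrix $P=(p_{ij})$ with nonnegative entries whose row and column sums all equal $\frac1n$. $\Xi=(\xi_{ij})$ with $\xi_{ij}=1$ if $i=j$, $2$ if $i>j$, $0$ if $i<j$. Problem (P): minimize $I(P)=\sum_{i,j}p_{ij}\log p_{ij}$ (with $0\log0=0$) over $n\times n$ checkerboard copulas $P$ with $1-\mathrm{tr}(\Xi P\Xi P^\top)=\mu$. An optimal solution of (P) is called a MICK (minimum information checkerboard copula under fixed Kendall's $\tau$). *)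

(* Defs.v *)
From mathcomp Require Import all_boot all_order all_algebra.
From mathcomp Require Import all_classical all_reals all_analysis.
Set Implicit Arguments. Unset Strict Implicit. Unset Printing Implicit Defensive.
Import Order.TTheory GRing.Theory Num.Theory.
Local Open Scope ring_scope.

(* Convention: indices are 0-based ('I_n), i.e. the paper's index i is our i+1. *)

Definition xlogx {R : realType} (x : R) : R := if x == 0 then 0 else x * ln x.

Definition checkerboard_copula {R : realType} (n : nat) (P : 'M[R]_n) : Prop :=
  (forall i j, 0 <= P i j) /\
  (forall i, \sum_(j < n) P i j = n%:R^-1) /\
  (forall j, \sum_(i < n) P i j = n%:R^-1).

Definition Xi {R : realType} (n : nat) : 'M[R]_n :=
  \matrix_(i < n, j < n) (if i == j then 1 else if (j < i)%N then 2 else 0).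

Definition ktau {R : realType} (n : nat) (P : 'M[R]_n) : R :=
  1 - \tr (Xi n *m P *m Xi n *m P^T).

Definition Ient {R : realType} (n : nat) (P : 'M[R]_n) : R :=
  \sum_(i < n) \sum_(j < n) xlogx (P i j).

Definition feasible {R : realType} (n : nat) (mu : R) (P : 'M[R]_n) : Prop :=
  checkerboard_copula P /\ ktau P = mu.

Definition MICK {R : realType} (n : nat) (mu : R) (P : 'M[R]_n) : Prop :=
  feasible mu P /\ forall Q : 'M[R]_n, feasible mu Q -> Ient P <= Ient Q.

Definition TP2 {R : realType} (n : nat) (P : 'M[R]_n) : Prop :=
  forall (i i' j j' : 'I_n), (i < i')%N -> (j < j')%N ->
    P i j * P i' j' >= P i j' * P i' j.

(* Main.v *)
Require Import Defs.
From mathcomp Require Import all_boot all_order all_algebra.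
From mathcomp Require Import all_classical all_reals all_analysis.
From mathcomp Require Import lra ring zify.
Import Order.TTheory GRing.Theory Num.Theory.
Import numFieldNormedType.Exports.
Local Open Scope ring_scope.

Section E.
Variable R : realType.

Lemma ln_le z : 0 < z -> ln z <= z - 1 :> R.
Proof.
move=> z0; have := expR_ge1Dx (ln z); rewrite lnK ?qualifE //; lra.
Qed.

Lemma ln_lt z : 0 < z -> z != 1 -> ln z < z - 1 :> R.
Proof.
move=> z0 z1; have : ln z != 0 by rewrite ln_eq0.
move/expR_gt1Dx; rewrite lnK ?qualifE //; lra.
Qed.

Lemma xlogx_pos (x : R) : 0 < x -> xlogx x = x * ln x.
Proof. by move=> x0; rewrite /xlogx gt_eqF. Qed.

Lemma xlogx0 : xlogx (0 : R) = 0.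
Proof. by rewrite /xlogx eqxx. Qed.

Lemma tangent_lt (x y : R) : 0 <= x -> 0 < y -> x != y ->
  (x - y) * (ln y + 1) < xlogx x - xlogx y.
Proof.
move=> x0 y0 xy; rewrite (@xlogx_pos y y0).
case: (eqVneq x 0) => [->|xn0].
  rewrite xlogx0; nra.
have xp : 0 < x by rewrite lt_neqAle eq_sym xn0.
rewrite (@xlogx_pos x xp).
have h := @ln_lt (y / x) (divr_gt0 y0 xp).
have : y / x != 1 by rewrite -[1](divff (lt0r_neq0 xp)) (inj_eq (mulIf _)) ?invr_eq0 ?lt0r_neq0 // eq_sym.
move=> /h; rewrite ln_div ?qualifE // => h2.
have h3 : x * (ln y - ln x) < x * (y / x - 1) by rewrite ltr_pM2l.
have e : x * (y / x - 1) = y - x by field; rewrite lt0r_neq0.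
rewrite e mulrBr in h3; nra.
Qed.

Lemma tangent_le (x y : R) : 0 <= x -> 0 < y ->
  (x - y) * (ln y + 1) <= xlogx x - xlogx y.
Proof.
move=> x0 y0; case: (eqVneq x y) => [->|xy]; first by rewrite !subrr mul0r.
by apply/ltW/tangent_lt.
Qed.

Lemma xlogx_convex (x y s : R) : 0 <= x -> 0 < y -> 0 <= s <= 1 ->
  xlogx (x + s * (y - x)) <= (1 - s) * xlogx x + s * xlogx y.
Proof.
move=> x0 y0 /andP[s0 s1]; case: (eqVneq s 0) => [->|sn0].
  by rewrite !mul0r !addr0 subr0 mul1r.
have sp : 0 < s by rewrite lt_neqAle eq_sym sn0.
have zp : 0 < x + s * (y - x) by nra.
have h1 := @tangent_le x _ x0 zp; have h2 := @tangent_le y _ (ltW y0) zp.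
set z := x + s * (y - x) in zp h1 h2 *.
set L := ln z + 1 in h1 h2.
have e : (1 - s) * (x - z) + s * (y - z) = 0 by rewrite /z; ring.
have h1' : (1 - s) * ((x - z) * L) <= (1 - s) * (xlogx x - xlogx z).
  by rewrite ler_wpM2l // subr_ge0.
have h2' : s * ((y - z) * L) <= s * (xlogx y - xlogx z) by rewrite ler_wpM2l.
have e2 : (1 - s) * ((x - z) * L) + s * ((y - z) * L) = 0.
  by rewrite !mulrA -mulrDl e mul0r.
lra.
Qed.
End E.

Section S.
Variable R : realType.
Variable n : nat.
Local Notation XI := (@Xi R n).

Definition BB (X Y : 'M[R]_n) : R :=
  \sum_(a < n) \sum_(b < n) \sum_(m < n) \sum_(k < n)
     Xi n a k * X k m * Xi n m b * Y a b.

Lemma trBB X Y : \tr (Xi n *m X *m Xi n *m Y^T) = BB X Y.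
Proof.
rewrite /mxtrace /BB; apply: eq_bigr => a _; rewrite !mxE.
apply: eq_bigr => b _; rewrite !mxE big_distrl /=.
apply: eq_bigr => m _; rewrite !mxE !big_distrl /=.
apply: eq_bigr => k _; by [].
Qed.

Definition comb (X Z : 'M[R]_n) (t : R) : 'M[R]_n := \matrix_(x, y) (X x y + t * Z x y).

Lemma combE X Z t x y : comb X Z t x y = X x y + t * Z x y.
Proof. by rewrite mxE. Qed.

Lemma BBl X Z Y t : BB (comb X Z t) Y = BB X Y + t * BB Z Y.
Proof.
rewrite /BB mulr_sumr -big_split; apply: eq_bigr => a _ /=.
rewrite mulr_sumr -big_split; apply: eq_bigr => b _ /=.
rewrite mulr_sumr -big_split; apply: eq_bigr => m _ /=.
rewrite mulr_sumr -big_split; apply: eq_bigr => k _ /=.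
rewrite combE; ring.
Qed.

Lemma BBr X Z Y t : BB Y (comb X Z t) = BB Y X + t * BB Y Z.
Proof.
rewrite /BB mulr_sumr -big_split; apply: eq_bigr => a _ /=.
rewrite mulr_sumr -big_split; apply: eq_bigr => b _ /=.
rewrite mulr_sumr -big_split; apply: eq_bigr => m _ /=.
rewrite mulr_sumr -big_split; apply: eq_bigr => k _ /=.
rewrite combE; ring.
Qed.

Lemma XiE (a k : 'I_n) : XI a k = if (k < a)%N then (2:R) else if (nat_of_ord a == nat_of_ord k) then 1 else 0.
Proof.
rewrite mxE.
have [h|h|h] := ltngtP k a.
- have /negbTE -> : a != k by rewrite -val_eqE /= gtn_eqF.
  by [].
- have /negbTE -> : a != k by rewrite -val_eqE /= ltn_eqF.
  by [].
- have -> : a = k by apply: val_inj.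
  by rewrite !eqxx.
Qed.

Lemma Xi_row (a k k' : 'I_n) : (k <= k')%N -> XI a k' <= XI a k.
Proof.
move=> kk; rewrite !XiE.
case: (ltngtP k a) => h1; case: (ltngtP k' a) => h2 //=; try lia;
  lra.
Qed.

Lemma Xi_col (b k k' : 'I_n) : (k <= k')%N -> XI k b <= XI k' b.
Proof.
move=> kk; rewrite !XiE.
case: (ltngtP b k) => h1; case: (ltngtP b k') => h2 //=; try lia;
  lra.
Qed.

Lemma Xi_sym (a k : 'I_n) : XI a k + XI k a = 2.
Proof.
rewrite !XiE; case: (ltngtP k a) => h //=; rewrite ?add0r ?addr0 //; try lra.
all: rewrite ?h ?eqxx; lra.
Qed.
Definition dd (x y a b : 'I_n) : R := ((a == x) && (b == y))%:R.

Lemma sum_dd_r (F : 'I_n -> 'I_n -> R) x y :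
  \sum_a \sum_b F a b * dd x y a b = F x y.
Proof.
rewrite (bigD1 x) //= [X in _ + X]big1 ?addr0.
  rewrite (bigD1 y) //= [X in _ + X]big1 ?addr0; first by rewrite /dd !eqxx mulr1.
  by move=> b hb; rewrite /dd eqxx (negbTE hb) mulr0.
by move=> a ha; apply: big1 => b _; rewrite /dd (negbTE ha) mulr0.
Qed.

Lemma sum_dd_c (F : 'I_n -> 'I_n -> R) x y :
  \sum_b \sum_a F a b * dd x y a b = F x y.
Proof. by rewrite exchange_big sum_dd_r. Qed.

Lemma rowsum_dd x y a : \sum_b dd x y a b = (a == x)%:R.
Proof.
case: (eqVneq a x) => h.
  rewrite (bigD1 y) //= [X in _ + X]big1 ?addr0; first by rewrite /dd h !eqxx.
  by move=> b hb; rewrite /dd h eqxx (negbTE hb).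
by apply: big1 => b _; rewrite /dd (negbTE h).
Qed.

Lemma colsum_dd x y b : \sum_a dd x y a b = (b == y)%:R.
Proof.
case: (eqVneq b y) => h.
  rewrite (bigD1 x) //= [X in _ + X]big1 ?addr0; first by rewrite /dd h !eqxx.
  by move=> a ha; rewrite /dd h eqxx (negbTE ha).
by apply: big1 => a _; rewrite /dd (negbTE h) andbF.
Qed.

Definition DD (x x' y y' a b : 'I_n) : R :=
  dd x y a b + dd x' y' a b - dd x y' a b - dd x' y a b.

Lemma sum_D_r (F : 'I_n -> 'I_n -> R) x x' y y' :
  \sum_a \sum_b F a b * DD x x' y y' a b = F x y + F x' y' - F x y' - F x' y.
Proof.
rewrite -(sum_dd_r F x y) -(sum_dd_r F x' y') -(sum_dd_r F x y') -(sum_dd_r F x' y).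
rewrite -big_split -!sumrB /=; apply: eq_bigr => a _.
rewrite -big_split -!sumrB /=; apply: eq_bigr => b _.
rewrite /DD; ring.
Qed.

Lemma sum_D_c (F : 'I_n -> 'I_n -> R) x x' y y' :
  \sum_b \sum_a F a b * DD x x' y y' a b = F x y + F x' y' - F x y' - F x' y.
Proof. by rewrite exchange_big sum_D_r. Qed.

Lemma rowsum_D x x' y y' a : \sum_b DD x x' y y' a b = 0.
Proof.
rewrite /DD !sumrB !big_split /= !rowsum_dd; ring.
Qed.

Lemma colsum_D x x' y y' b : \sum_a DD x x' y y' a b = 0.
Proof.
rewrite /DD !sumrB !big_split /= !colsum_dd; ring.
Qed.

Definition Dm x x' y y' : 'M[R]_n := \matrix_(a, b) DD x x' y y' a b.

Lemma DmE x x' y y' a b : Dm x x' y y' a b = DD x x' y y' a b.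
Proof. by rewrite mxE. Qed.

Lemma BB_D_l (x x' y y' : 'I_n) (Y : 'M[R]_n) : (x <= x')%N -> (y <= y')%N ->
  (forall a b, 0 <= Y a b) -> BB (Dm x x' y y') Y <= 0.
Proof.
move=> hx hy hY; rewrite /BB; apply: sumr_le0 => a _; apply: sumr_le0 => b _.
have -> : \sum_(m < n) \sum_(k < n) XI a k * Dm x x' y y' k m * XI m b * Y a b
   = \sum_m \sum_k (XI a k * XI m b * Y a b) * DD x x' y y' k m.
  apply: eq_bigr => m _; apply: eq_bigr => k _; rewrite DmE; ring.
rewrite sum_D_c.
have -> : XI a x * XI y b * Y a b + XI a x' * XI y' b * Y a b -
  XI a x * XI y' b * Y a b - XI a x' * XI y b * Y a b =
  Y a b * (XI a x - XI a x') * (XI y b - XI y' b) by ring.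
apply: mulr_ge0_le0; first apply: mulr_ge0 => //.
  by rewrite subr_ge0 Xi_row.
by rewrite subr_le0 Xi_col.
Qed.

Lemma BB_D_r (x x' y y' : 'I_n) (Y : 'M[R]_n) : (x <= x')%N -> (y <= y')%N ->
  (forall a b, 0 <= Y a b) -> BB Y (Dm x x' y y') <= 0.
Proof.
move=> hx hy hY; rewrite /BB.
have -> : \sum_(a < n) \sum_(b < n) \sum_(m < n) \sum_(k < n)
    XI a k * Y k m * XI m b * Dm x x' y y' a b
  = \sum_a \sum_b (\sum_(m < n) \sum_(k < n) XI a k * Y k m * XI m b) * DD x x' y y' a b.
  apply: eq_bigr => a _; apply: eq_bigr => b _; rewrite big_distrl /=.
  apply: eq_bigr => m _; rewrite big_distrl /=; apply: eq_bigr => k _.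
  by rewrite DmE.
rewrite sum_D_r -big_split -!sumrB /=; apply: sumr_le0 => m _.
rewrite -big_split -!sumrB /=; apply: sumr_le0 => k _.
have -> : XI x k * Y k m * XI m y + XI x' k * Y k m * XI m y' -
  XI x k * Y k m * XI m y' - XI x' k * Y k m * XI m y =
  Y k m * (XI x k - XI x' k) * (XI m y - XI m y') by ring.
apply: mulr_le0_ge0; first apply: mulr_ge0_le0 => //.
  by rewrite subr_le0 Xi_col.
by rewrite subr_ge0 Xi_row.
Qed.
Lemma DD_zero (x x' y y' a b : 'I_n) :
  ~~((a == x) && (b == y)) -> ~~((a == x') && (b == y')) ->
  ~~((a == x) && (b == y')) -> ~~((a == x') && (b == y)) -> DD x x' y y' a b = 0.
Proof.
move=> /negbTE h1 /negbTE h2 /negbTE h3 /negbTE h4.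
by rewrite /DD /dd h1 h2 h3 h4 /= !subr0 addr0.
Qed.

Lemma total_sum (X : 'M[R]_n) : (0 < n)%N -> (forall a, \sum_b X a b = n%:R^-1) ->
  \sum_a \sum_b X a b = 1.
Proof.
move=> n0 h; under eq_bigr do rewrite h.
rewrite sumr_const card_ord.
have -> : (n%:R^-1 : R) *+ n = n%:R^-1 * n%:R by rewrite mulr_natr.
by rewrite mulVf // pnatr_eq0 -lt0n.
Qed.

Lemma sumXi : \sum_a \sum_k XI a k = n%:R ^+ 2.
Proof.
have e : \sum_a \sum_k (XI a k + XI k a) = 2 * n%:R ^+ 2.
  under eq_bigr do under eq_bigr do rewrite Xi_sym.
  rewrite !sumr_const !card_ord.
  have -> : (n%:R ^+ 2 : R) = (n * n)%:R by rewrite natrM expr2.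
  by rewrite mulr_natr mulrnA.
have e2 : \sum_a \sum_k (XI a k + XI k a) = 2 * \sum_a \sum_k XI a k.
  under eq_bigr do rewrite big_split /=.
  by rewrite big_split /= [X in _ + X]exchange_big /= mulr_natl mulr2n.
have two : (2 : R) != 0 by rewrite pnatr_eq0.
by apply: (mulfI two); rewrite -e2 e.
Qed.

Definition c0 : R := (n%:R ^+ 2)^-1.
Definition Pim : 'M[R]_n := \matrix_(x, y) c0.
Lemma PimE x y : Pim x y = c0. Proof. by rewrite mxE. Qed.

Lemma c0_gt0 : (0 < n)%N -> 0 < c0.
Proof. by move=> n0; rewrite /c0 invr_gt0 exprn_gt0 // ltr0n. Qed.

Lemma c0_sum : (0 < n)%N -> c0 *+ n = n%:R^-1.
Proof.
move=> n0; have nz : (n%:R : R) != 0 by rewrite pnatr_eq0 -lt0n.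
by rewrite -mulr_natr /c0; field.
Qed.

Lemma Pim_row : (0 < n)%N -> forall x, \sum_y Pim x y = n%:R^-1.
Proof.
move=> n0 x; under eq_bigr do rewrite PimE.
by rewrite sumr_const card_ord c0_sum.
Qed.

Lemma Pim_col : (0 < n)%N -> forall y, \sum_x Pim x y = n%:R^-1.
Proof.
move=> n0 y; under eq_bigr do rewrite PimE.
by rewrite sumr_const card_ord c0_sum.
Qed.

Lemma BB_Pim : (0 < n)%N -> BB Pim Pim = 1.
Proof.
move=> n0; rewrite /BB.
have inner : forall a b : 'I_n, \sum_(m < n) \sum_(k < n) XI a k * Pim k m * XI m b * Pim a b
   = c0 ^+ 2 * ((\sum_k XI a k) * (\sum_m XI m b)).
  move=> a b; rewrite big_distrr /= mulr_sumr; apply: eq_bigr => m _.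
  rewrite big_distrl /= mulr_sumr; apply: eq_bigr => k _.
  rewrite !PimE; ring.
under eq_bigr do under eq_bigr do rewrite inner.
have -> : \sum_(a < n) \sum_(b < n) c0 ^+ 2 * ((\sum_k XI a k) * (\sum_m XI m b))
   = c0 ^+ 2 * ((\sum_a \sum_k XI a k) * (\sum_b \sum_m XI m b)).
  rewrite big_distrl /= mulr_sumr; apply: eq_bigr => a _.
  rewrite big_distrr /= mulr_sumr; apply: eq_bigr => b _.
  by [].
rewrite sumXi exchange_big /= sumXi /c0.
have nz : (n%:R : R) != 0 by rewrite pnatr_eq0 -lt0n.
by field.
Qed.

Lemma sum2_gt0 (h : 'I_n -> 'I_n -> R) x0 y0 :
  (forall x y, 0 <= h x y) -> 0 < h x0 y0 -> 0 < \sum_x \sum_y h x y.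
Proof.
move=> h0 hp; rewrite (bigD1 x0) //= (bigD1 y0) //=.
apply: (lt_le_trans hp); rewrite -addrA lerDl.
apply: addr_ge0; apply: sumr_ge0 => x _ //; apply: sumr_ge0 => y _ //.
Qed.

Lemma main (mu : R) (P : 'M[R]_n) (i i' j j' : 'I_n) :
  (0 < n)%N -> 0 <= mu -> MICK mu P -> (i < i')%N -> (j < j')%N ->
  P i j' * P i' j <= P i j * P i' j'.
Proof.
move=> n0 mu0 [[[P0 [Prow Pcol]] tauP] Hmin] ii jj.
rewrite leNgt; apply/negP => Hlt.
have hi : (i == i') = false by apply/eqP => e; move: ii; rewrite e ltnn.
have hj : (j == j') = false by apply/eqP => e; move: jj; rewrite e ltnn.
have hi' : (i' == i) = false by rewrite eq_sym.
have hj' : (j' == j) = false by rewrite eq_sym.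
have a0 := P0 i j; have b0 := P0 i j'; have c0' := P0 i' j; have d0 := P0 i' j'.
move: Hlt a0 b0 c0' d0.
set a := P i j; set b := P i j'; set c := P i' j; set d := P i' j'.
move=> Hlt a0 b0 c0' d0.
have bp : 0 < b.
  rewrite lt_neqAle b0 andbT; apply/eqP => e.
  by move: Hlt; rewrite -e mul0r ltNge mulr_ge0.
have cp : 0 < c.
  rewrite lt_neqAle c0' andbT; apply/eqP => e.
  by move: Hlt; rewrite -e mulr0 ltNge mulr_ge0.
pose S := a + b + c + d.
have Sp : 0 < S by rewrite /S; lra.
pose t := (b * c - a * d) / S.
have tS : t * S = b * c - a * d by rewrite /t divfK // gt_eqF.
have tp : 0 < t by rewrite /t divr_gt0 // subr_gt0.
have tb : t < b.
  have : t * S < b * S by rewrite tS /S; nra.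
  by rewrite ltr_pM2r.
have tc : t < c.
  have : t * S < c * S by rewrite tS /S; nra.
  by rewrite ltr_pM2r.
pose D := Dm i i' j j'.
pose Q := comb P D t.
have QE : forall x y, Q x y = P x y + t * DD i i' j j' x y.
  by move=> x y; rewrite /Q combE DmE.
have Dij : DD i i' j j' i j = 1 by rewrite /DD /dd !eqxx hi hj /=; ring.
have Di'j' : DD i i' j j' i' j' = 1 by rewrite /DD /dd !eqxx hi' hj' /=; ring.
have Dij' : DD i i' j j' i j' = -1 by rewrite /DD /dd !eqxx hi hj' /=; ring.
have Di'j : DD i i' j j' i' j = -1 by rewrite /DD /dd !eqxx hi' hj /=; ring.
have Qij : Q i j = a + t by rewrite QE Dij mulr1.
have Qi'j' : Q i' j' = d + t by rewrite QE Di'j' mulr1.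
have Qij' : Q i j' = b - t by rewrite QE Dij' mulrN1.
have Qi'j : Q i' j = c - t by rewrite QE Di'j mulrN1.
have Qcase : forall x y, Q x y = P x y \/ 0 < Q x y.
  move=> x y.
  case: (boolP ((x == i) && (y == j))) => [/andP[/eqP -> /eqP ->]|h1].
    by right; rewrite Qij; lra.
  case: (boolP ((x == i') && (y == j'))) => [/andP[/eqP -> /eqP ->]|h2].
    by right; rewrite Qi'j'; lra.
  case: (boolP ((x == i) && (y == j'))) => [/andP[/eqP -> /eqP ->]|h3].
    by right; rewrite Qij'; lra.
  case: (boolP ((x == i') && (y == j))) => [/andP[/eqP -> /eqP ->]|h4].
    by right; rewrite Qi'j; lra.
  by left; rewrite QE DD_zero // mulr0 addr0.
have Q0 : forall x y, 0 <= Q x y.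
  by move=> x y; case: (Qcase x y) => [->|/ltW].
have Qrow : forall x, \sum_y Q x y = n%:R^-1.
  move=> x; under eq_bigr do rewrite QE.
  by rewrite big_split /= -mulr_sumr rowsum_D mulr0 addr0 Prow.
have Qcol : forall y, \sum_x Q x y = n%:R^-1.
  move=> y; under eq_bigr do rewrite QE.
  by rewrite big_split /= -mulr_sumr colsum_D mulr0 addr0 Pcol.
have tauQ : mu <= ktau Q.
  rewrite /ktau trBB -tauP /ktau trBB.
  have -> : BB Q Q = BB P P + t * BB D P + t * BB Q D.
    by rewrite {1}/Q BBr /Q BBl.
  have h1 : BB D P <= 0 by apply: BB_D_l => //; apply: ltnW.
  have h2 : BB Q D <= 0 by apply: BB_D_r => //; apply: ltnW.
  have h3 := mulr_ge0_le0 (ltW tp) h1.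
  have h4 := mulr_ge0_le0 (ltW tp) h2.
  move: h3 h4; move: (t * BB D P) (t * BB Q D) (BB P P) => u v w; lra.
have IQ : Ient Q < Ient P.
  rewrite -subr_gt0 /Ient -sumrB; under eq_bigr do rewrite -sumrB.
  pose g x y := (P x y - Q x y) * (ln (Q x y) + 1).
  pose h x y := xlogx (P x y) - xlogx (Q x y) - g x y.
  have -> : \sum_x \sum_y (xlogx (P x y) - xlogx (Q x y))
      = \sum_x \sum_y h x y + \sum_x \sum_y g x y.
    rewrite -big_split /=; apply: eq_bigr => x _.
    rewrite -big_split /=; apply: eq_bigr => y _.
    by rewrite /h subrK.
  have -> : \sum_x \sum_y g x y = 0.
    have -> : \sum_x \sum_y g x y
        = \sum_x \sum_y (- t * (ln (Q x y) + 1)) * DD i i' j j' x y.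
      apply: eq_bigr => x _; apply: eq_bigr => y _.
      by rewrite /g QE; ring.
    rewrite sum_D_r Qij Qi'j' Qij' Qi'j.
    have L1 : ln ((a + t) * (d + t)) = ln (a + t) + ln (d + t).
      by rewrite lnM ?qualifE //=; lra.
    have L2 : ln ((b - t) * (c - t)) = ln (b - t) + ln (c - t).
      by rewrite lnM ?qualifE //=; lra.
    have E : (a + t) * (d + t) = (b - t) * (c - t).
      move: tS; rewrite /S => tS'; lra.
    rewrite E in L1.
    move: L1 L2; move: (ln (a + t)) (ln (d + t)) (ln (b - t)) (ln (c - t)) => u1 u2 u3 u4.
    move=> L1; rewrite L1 => L2; nra.
  rewrite addr0; apply: (@sum2_gt0 h i j').
    move=> x y; rewrite /h /g subr_ge0.
    case: (Qcase x y) => [->|qp]; first by rewrite !subrr mul0r.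
    exact: tangent_le.
  rewrite /h /g subr_gt0 Qij'; apply: tangent_lt => //.
    by rewrite subr_gt0.
  by rewrite -subr_eq0 opprB addrC subrK gt_eqF.
pose Em : 'M[R]_n := \matrix_(x, y) (Pim x y - Q x y).
have EmE : forall x y, Em x y = Pim x y - Q x y by move=> x y; rewrite mxE.
pose Qs s := comb Q Em s.
pose p : {poly R} := (1 - BB Q Q)%:P - (BB Em Q + BB Q Em) *: 'X - BB Em Em *: 'X^2.
have pE : forall s, p.[s] = ktau (Qs s).
  move=> s; rewrite /ktau trBB /Qs BBr (BBl Q Em Q s) (BBl Q Em Em s).
  rewrite !(hornerD, hornerN, hornerZ, hornerC, hornerX, hornerXn); ring.
have p0 : p.[0] = ktau Q.
  by rewrite /ktau trBB !(hornerD, hornerN, hornerZ, hornerC, hornerX, hornerXn); ring.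
have p1 : p.[1] = 0.
  rewrite pE.
  have -> : Qs 1 = Pim.
    by apply/matrixP => x y; rewrite /Qs combE EmE mul1r addrC subrK.
  by rewrite /ktau trBB BB_Pim // subrr.
have [s s01 ps] : exists2 s, s \in `[0, 1] & p.[s] = mu.
  apply: IVT; first exact: ler01.
    by apply/continuous_subspaceT => x; exact: continuous_horner.
  rewrite p0 p1 ge_min le_max; apply/andP; split; apply/orP; [right|left] => //.
move: s01; rewrite in_itv /= => /andP[s0 s1].
have c0p := c0_gt0 n0.
have QsE : forall x y, Qs s x y = Q x y + s * (c0 - Q x y).
  by move=> x y; rewrite /Qs combE EmE PimE.
have feas : feasible mu (Qs s).
  split; last by rewrite -pE.
  split.
    move=> x y; rewrite QsE; have := Q0 x y; nra.
  split.
    move=> x; under eq_bigr do rewrite /Qs combE EmE.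
    by rewrite big_split /= -mulr_sumr sumrB Pim_row // Qrow subrr mulr0 addr0.
  move=> y; under eq_bigr do rewrite /Qs combE EmE.
  by rewrite big_split /= -mulr_sumr sumrB Pim_col // Qcol subrr mulr0 addr0.
have I0 : \sum_(x < n) \sum_(y < n) xlogx c0 <= Ient Q.
  rewrite -subr_ge0 /Ient -sumrB; under eq_bigr do rewrite -sumrB.
  apply: (@le_trans _ _ (\sum_(x < n) \sum_(y < n) (Q x y - Pim x y) * (ln c0 + 1))).
    have -> : \sum_(x < n) \sum_(y < n) (Q x y - Pim x y) * (ln c0 + 1)
       = (\sum_(x < n) \sum_(y < n) Q x y - \sum_(x < n) \sum_(y < n) Pim x y) * (ln c0 + 1).
      rewrite -sumrB big_distrl /=; apply: eq_bigr => x _.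
      by rewrite -sumrB big_distrl.
    by rewrite (@total_sum Q n0 Qrow) (@total_sum Pim n0 (Pim_row n0)) subrr mul0r.
  apply: ler_sum => x _; apply: ler_sum => y _.
  by rewrite PimE; apply: tangent_le.
have IQs : Ient (Qs s) <= Ient Q.
  apply: (@le_trans _ _ ((1 - s) * Ient Q + s * \sum_(x < n) \sum_(y < n) xlogx c0)).
    rewrite /Ient !mulr_sumr -big_split /=; apply: ler_sum => x _.
    rewrite !mulr_sumr -big_split /=; apply: ler_sum => y _.
    rewrite QsE; apply: xlogx_convex => //; by rewrite s0 s1.
  move: I0; move: (\sum_(x < n) \sum_(y < n) xlogx c0) (Ient Q) => u v h.
  have h2 : 0 <= s * (v - u) by rewrite mulr_ge0 // subr_ge0.
  lra.
have := Hmin _ feas.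
move: IQ IQs; move: (Ient P) (Ient Q) (Ient (Qs s)) => u v w; lra.
Qed.

End S.

Theorem proposition3 (R : realType) (n : nat) (mu : R) :
  (2 <= n)%N -> 0 <= mu -> mu <= 1 - n%:R^-1 ->
  forall P : 'M[R]_n, MICK mu P -> TP2 P.
Proof.
move=> n2 mu0 _ P HP i i' j j' ii jj.
apply: (@main R n mu P i i' j j') => //.
by apply: leq_trans n2.
Qed.
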